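(* Let $\dot x=f(x)+\sum_{i=1}^m g_i(x)u_i$ with $m\ge2$, and let $h:\mathbb{R}^n\to\mathbb{R}$ have relative degree $r<n$ at $x$, with $\xi=[h,L_fh,\dots,L_f^{r-1}h]^\top$. If $g_1(x),\dots,g_m(x)$ are linearly independent, then there is no map $\eta:\mathbb{R}^n\to\mathbb{R}^{n-r}$, differentiable at $x$, that satisfies both of the following: (1) the Jacobian $\begin{bmatrix} d\xi\\ d\eta\end{bmatrix}\in\mathbb{R}^{n\times n}$ is nonsingular at $x$; and (2) there is an open set around $x$ on which $L_{g_i}\eta_j=0$ for all $i=1,\dots,m$ and $j=1,\dots,n-r$.
   Context: $L_f$, $L_{g_i}$ denote Lie derivatives along vector fields. $h$ has relative degree $r$ at $x$ if for all $i=1,\dots,m$ and $k=0,\dots,r-2$, $L_{g_i}L_f^k h\equiv0$ on an open set around $x$, and the row vector $[L_{g_1}L_f^{r-1}h(x),\dots,L_{g_m}L_f^{r-1}h(x)]$ has a nonzero entry. *)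

(* Defs.v *)
From HB Require Import structures.
From mathcomp Require Import all_boot all_order all_algebra.
From mathcomp Require Import all_classical all_reals all_analysis.
Set Implicit Arguments. Unset Strict Implicit. Unset Printing Implicit Defensive.
Import Order.TTheory GRing.Theory Num.Theory.
Import numFieldNormedType.Exports.
Local Open Scope classical_set_scope.
Local Open Scope ring_scope.

Section Defs.
Variables (R : realType) (n : nat).
Notation V := 'rV[R]_n.

Fixpoint iterD (W : normedModType R) (F : V -> W) (vs : seq V) : V -> W :=
  match vs with
  | [::] => F
  | v :: vs' => fun y => 'D_v (iterD F vs') y
  end.

Definition smooth (W : normedModType R) (F : V -> W) : Prop :=
  forall (vs : seq V) (y : V), differentiable (iterD F vs) y.

Definition Lie (g : V -> V) (phi : V -> R) : V -> R :=
  fun y => 'D_(g y) phi y.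

Definition Lien (f : V -> V) (k : nat) (h : V -> R) : V -> R :=
  iter k (Lie f) h.

Definition rel_degree (m : nat) (f : V -> V) (g : 'I_m -> V -> V)
    (h : V -> R) (r : nat) (x : V) : Prop :=
  (0 < r)%N /\
  (exists U : set V, open U /\ U x /\
     forall (i : 'I_m) (k : nat), (k.+2 <= r)%N ->
       forall y, U y -> Lie (g i) (Lien f k h) y = 0) /\
  (exists i : 'I_m, Lie (g i) (Lien f r.-1 h) x != 0).

Definition grad (phi : V -> R) (x : V) : 'rV[R]_n :=
  \row_(l < n) 'D_(delta_mx 0 l) phi x.

End Defs.

(* Main.v *)
Require Import Defs.
From HB Require Import structures.
From mathcomp Require Import all_boot all_order all_algebra.
From mathcomp Require Import all_classical all_reals all_analysis.
Import Order.TTheory GRing.Theory Num.Theory.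
Import numFieldNormedType.Exports.
Local Open Scope classical_set_scope.
Local Open Scope ring_scope.

Section H.
Variables (R : realType) (n : nat).
Notation V := 'rV[R]_n.

Lemma iterD_rcons (W : normedModType R) (F : V -> W) vs v :
  Defs.iterD F (rcons vs v) = Defs.iterD (fun y => 'D_v F y) vs.
Proof. by elim: vs => //= w vs ->. Qed.

Definition Pk (k : nat) (phi : V -> R) :=
  forall vs : seq V, (size vs <= k)%N -> forall y, differentiable (Defs.iterD phi vs) y.

Lemma PkS k phi : Pk k.+1 phi <->
  (forall y, differentiable phi y) /\ forall v, Pk k (fun y => 'D_v phi y).
Proof.
split.
  move=> H; split; first by move=> y; exact: (H [::]).
  by move=> v vs hs y; rewrite -iterD_rcons; apply: H; rewrite size_rcons.
move=> [H0 H] vs; case/lastP: vs => [|vs v] hs y; first exact: H0.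
rewrite iterD_rcons; apply: H; by rewrite size_rcons in hs.
Qed.

Lemma Pk0 phi : Pk 0 phi <-> forall y, differentiable phi y.
Proof.
split; first by move=> H y; exact: (H [::]).
by move=> H [|//] _ y; exact: H.
Qed.

Lemma Pk_mon k phi : Pk k.+1 phi -> Pk k phi.
Proof. by move=> H vs hs; apply: H; exact: leqW. Qed.

Lemma Pk_cst k c : Pk k (fun _ => c).
Proof.
elim: k c => [|k IH] c; first by apply/Pk0 => y; exact: differentiable_cst.
apply/PkS; split; first by move=> y; exact: differentiable_cst.
move=> v; have -> : (fun y => 'D_v (fun _ : V => c) y) = (fun _ => 0).
  by apply/funext => y; exact: derive_cst.
exact: IH.
Qed.

Lemma Pk_add k phi psi : Pk k phi -> Pk k psi -> Pk k (fun y => phi y + psi y).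
Proof.
elim: k phi psi => [|k IH] phi psi.
  move=> /Pk0 H1 /Pk0 H2; apply/Pk0 => y; exact: differentiableD.
move=> /PkS [d1 H1] /PkS [d2 H2]; apply/PkS; split.
  by move=> y; exact: differentiableD.
move=> v.
have -> : (fun y => 'D_v (fun y => phi y + psi y) y) =
          (fun y => 'D_v phi y + 'D_v psi y).
  by apply/funext => y; rewrite (@deriveD _ _ _ phi psi) //; exact: diff_derivable.
exact: IH.
Qed.

Lemma Pk_mul k phi psi : Pk k phi -> Pk k psi -> Pk k (fun y => phi y * psi y).
Proof.
elim: k phi psi => [|k IH] phi psi.
  move=> /Pk0 H1 /Pk0 H2; apply/Pk0 => y; exact: differentiableM.
move=> P1 P2; have [d1 H1] := (PkS _ _).1 P1; have [d2 H2] := (PkS _ _).1 P2.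
apply/PkS; split.
  by move=> y; exact: differentiableM.
move=> v.
have -> : (fun y => 'D_v (fun y => phi y * psi y) y) =
          (fun y => phi y * 'D_v psi y + psi y * 'D_v phi y).
  by apply/funext => y; rewrite (@deriveM _ _ phi psi) //; exact: diff_derivable.
apply: Pk_add; apply: IH => //; exact: Pk_mon.
Qed.

Lemma Pk_sum k (I : Type) (s : seq I) (F : I -> V -> R) :
  (forall i, Pk k (F i)) -> Pk k (fun y => \sum_(i <- s) F i y).
Proof.
move=> H; elim: s => [|a s IH].
  have -> : (fun y => \sum_(i <- [::]) F i y) = (fun _ => 0).
    by apply/funext => y; rewrite big_nil.
  exact: Pk_cst.
have -> : (fun y => \sum_(i <- a :: s) F i y) = (fun y => F a y + \sum_(i <- s) F i y).
  by apply/funext => y; rewrite big_cons.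
exact: Pk_add.
Qed.

Lemma smoothP (phi : V -> R) : smooth phi <-> forall k, Pk k phi.
Proof.
split; first by move=> H k vs _ y; exact: H.
by move=> H vs y; exact: (H (size vs)).
Qed.

Lemma smooth_D (phi : V -> R) v : smooth phi -> smooth (fun y => 'D_v phi y).
Proof. by move=> H vs y; rewrite -iterD_rcons; exact: H. Qed.


Lemma D_coord (F : V -> V) y w (l : 'I_n) : derivable F y w ->
  'D_w (fun z => F z 0 l) y = ('D_w F y) 0 l.
Proof.
move=> dF; apply: cvg_lim => //.
have := cvg_comp _ _ dF (@coord_continuous R 1 n 0 l _).
apply: cvg_trans; apply: near_eq_cvg; near=> h => /=.
by rewrite !mxE.
Unshelve. all: end_near.
Qed.


Lemma iterD_coord (F : V -> V) (l : 'I_n) vs : smooth F ->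
  Defs.iterD (fun z => F z 0 l) vs = (fun z => Defs.iterD F vs z 0 l).
Proof.
move=> sF; elim: vs => [//|w vs IH] /=.
rewrite IH; apply/funext => y; rewrite D_coord //.
exact/diff_derivable/sF.
Qed.

Lemma smooth_coord (F : V -> V) (l : 'I_n) : smooth F -> smooth (fun z => F z 0 l).
Proof.
move=> sF vs y; rewrite iterD_coord //.
apply: (@differentiable_comp _ _ _ _ (Defs.iterD F vs) (fun M : 'M[R]_(1, n) => M 0 l)).
  exact: sF.
exact: differentiable_coord.
Qed.

Lemma D_lin (phi : V -> R) y v : differentiable phi y ->
  'D_v phi y = \sum_(l < n) v 0 l * 'D_(delta_mx 0 l) phi y.
Proof.
move=> dphi; rewrite deriveE //.
under eq_bigr do rewrite deriveE //.
rewrite {1}(row_sum_delta v) linear_sum; apply: eq_bigr => l _.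
by rewrite linearZ.
Qed.

Lemma smooth_Lie (F : V -> V) (phi : V -> R) : smooth F -> smooth phi ->
  smooth (Lie F phi).
Proof.
move=> sF sphi.
have -> : Lie F phi = fun y => \sum_(l < n) F y 0 l * 'D_(delta_mx 0 l) phi y.
  apply/funext => y; rewrite /Lie D_lin //; exact: (sphi [::]).
apply/smoothP => k; apply: Pk_sum => l; apply: Pk_mul; apply: (proj1 (smoothP _)).
  exact: smooth_coord.
exact: smooth_D.
Qed.

Lemma smooth_Lien (F : V -> V) (phi : V -> R) k : smooth F -> smooth phi ->
  smooth (Lien F k phi).
Proof.
move=> sF sphi; elim: k => [//|k IH].
rewrite /Lien iterS; exact: smooth_Lie.
Qed.

End H.

From mathcomp Require Import zify.

Lemma diff_coord_comp (R : realType) (n p : nat) (F : 'rV[R]_n -> 'rV[R]_p)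
  (j : 'I_p) x : differentiable F x -> differentiable (fun z => F z 0 j) x.
Proof.
move=> dF.
apply: (@differentiable_comp _ _ _ _ F (fun M : 'M[R]_(1, p) => M 0 j)) => //.
exact: differentiable_coord.
Qed.

Lemma grad_mul (R : realType) (n : nat) (phi : 'rV[R]_n -> R) x (v : 'rV[R]_n) :
  differentiable phi x ->
  \sum_(l < n) grad phi x 0 l * v 0 l = 'D_v phi x.
Proof.
move=> d; rewrite D_lin //; apply: eq_bigr => l _; by rewrite mxE mulrC.
Qed.

Theorem theorem7 (R : realType) (n m : nat)
    (f : 'rV[R]_n -> 'rV[R]_n) (g : 'I_m -> 'rV[R]_n -> 'rV[R]_n)
    (h : 'rV[R]_n -> R) (r : nat) (x : 'rV[R]_n)
    (hm : (2 <= m)%N) (hrn : (r < n)%N)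
    (f_smooth : smooth f) (g_smooth : forall i, smooth (g i))
    (h_smooth : smooth h)
    (hrel : rel_degree f g h r x)
    (hindep : row_free (\matrix_(i < m) g i x)) :
  ~ exists eta : 'rV[R]_n -> 'rV[R]_(n - r),
      differentiable eta x /\
      (* (1) the Jacobian [d xi; d eta] at x is nonsingular *)
      castmx (subnKC (ltnW hrn), erefl n)
        (col_mx (\matrix_(k < r) grad (Lien f k h) x)
                (\matrix_(j < n - r) grad (fun y => eta y 0 j) x))
        \in unitmx /\
      (* (2) L_{g_i} eta_j = 0 on an open set around x *)
      (exists U : set 'rV[R]_n, open U /\ U x /\
         forall (i : 'I_m) (j : 'I_(n - r)) (y : 'rV[R]_n), U y ->
           Lie (g i) (fun z => eta z 0 j) y = 0).
Proof.
move=> [eta [deta [hunit [U [oU [Ux HU]]]]]].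
case: hrel => r0 [[U' [oU' [U'x HU']]] _].
set M := castmx _ _ in hunit.
set G := \matrix_(i < m) g i x.
have rowz : forall a : 'I_n, val a != r.-1 -> row a (M *m G^T) = 0.
  move=> a ha; apply/rowP => i; rewrite !mxE.
  under eq_bigr do rewrite !mxE castmxE !mxE.
  case: splitP => k hk /=.
  - under eq_bigr do rewrite cast_ord_id [X in X * _]mxE.
    rewrite grad_mul; last exact: (@smooth_Lien _ _ f h k f_smooth h_smooth [::] x).
    apply: HU' => //.
    move: ha hk => /= ha hk; have := ltn_ord k; lia.
  - under eq_bigr do rewrite cast_ord_id [X in X * _]mxE.
    rewrite grad_mul; last exact: diff_coord_comp.
    exact: HU.
have ir_lt : (r.-1 < n)%N by lia.
pose ir : 'I_n := Ordinal ir_lt.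
have sub : (M *m G^T <= row ir (M *m G^T))%MS.
  apply/row_subP => a.
  have [e|ne] := eqVneq (val a) r.-1.
    by have -> : a = ir by apply: val_inj.
  by rewrite (rowz a ne); apply: sub0mx.
have r1 : (\rank (M *m G^T) <= 1)%N.
  apply: leq_trans (mxrankS sub) _; exact: rank_leq_row.
have eG : G^T = invmx M *m (M *m G^T) by rewrite mulmxA mulVmx // mul1mx.
have : (\rank G^T <= 1)%N.
  by rewrite eG; apply: leq_trans (mxrankM_maxr _ _) r1.
have hG : \rank G = m by apply/eqP.
rewrite mxrank_tr hG => hm1.
by have := leq_trans hm hm1.
Qed.
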